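(* Let $X$ be a Hausdorff locally compact space. If $X$ is homeomorphic to the topological coproduct of an infinite family of compact spaces, then $X$ has infinitely many pairwise non-equivalent compactifications.
   Context: A compactification of $X$ is a compact Hausdorff space containing $X$ as a dense subspace; two compactifications are equivalent if there is a homeomorphism between them restricting to the identity on $X$. *)

(* Defs.v *)
From HB Require Import structures.
From mathcomp Require Import all_boot all_order all_algebra.
From mathcomp Require Import all_classical all_reals all_analysis.
Set Implicit Arguments. Unset Strict Implicit. Unset Printing Implicit Defensive.
Local Open Scope classical_set_scope.

Definition homeomorphism {A B : topologicalType} (f : A -> B) : Prop :=
  exists g : B -> A, [/\ continuous f, continuous g, cancel f g & cancel g f].

Definition homeomorphic (A B : topologicalType) : Prop :=
  exists f : A -> B, homeomorphism f.

Definition embedding {X K : topologicalType} (e : X -> K) : Prop :=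
  [/\ continuous e, injective e &
      forall U : set X, open U ->
        exists V : set K, open V /\ e @` U = V `&` range e].

Definition compactification {X K : topologicalType} (e : X -> K) : Prop :=
  [/\ compact [set: K], hausdorff_space K, embedding e & dense (range e)].

Definition equiv_compactification {X K1 K2 : topologicalType}
  (e1 : X -> K1) (e2 : X -> K2) : Prop :=
  exists h : K1 -> K2, homeomorphism h /\ (forall x, h (e1 x) = e2 x).

(* Main.v *)
Require Import Defs.
From HB Require Import structures.
From mathcomp Require Import all_boot all_order all_algebra.
From mathcomp Require Import all_classical all_reals all_analysis.
From mathcomp Require Import finmap.
Local Open Scope classical_set_scope.
Section KTsec.
Variables (X : topologicalType) (J : choiceType) (idx : X -> J) (n : nat) (cls : J -> 'I_n.+1).
Definition KT : Type := (fun _ _ => (X + 'I_n.+1)%type) idx cls.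
HB.instance Definition _ := Choice.on KT.
HB.instance Definition _ := isPointed.Build KT (inr ord0).
Definition kopen (U : set KT) : Prop :=
  open (fun x => U (inl x)) /\ forall k, U (inr k) ->
    exists s : seq J, forall x, cls (idx x) = k -> idx x \notin s -> U (inl x).
Lemma kopT : kopen setT.
Proof. by split; [exact: openT | move=> k _; exists [::]]. Qed.
Lemma kopI : setI_closed kopen.
Proof.
move=> A B [oA hA] [oB hB]; split; first exact: openI.
move=> k [/hA [s1 h1] /hB [s2 h2]]; exists (s1 ++ s2) => x hx.
by rewrite mem_cat negb_or => /andP[n1 n2]; split; [exact: h1|exact: h2].
Qed.
Lemma kop_bigU (I0 : Type) (f : I0 -> set KT) : (forall i, kopen (f i)) -> kopen (\bigcup_i f i).
Proof.
move=> hf; split.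
  have -> : (fun x => (\bigcup_i f i) (inl x)) = \bigcup_i (fun x => f i (inl x)) by [].
  by apply: bigcup_open => i _; case: (hf i).
move=> k [i _ /(hf i).2 [s hs]]; exists s => x h1 h2; exists i => //; exact: hs.
Qed.
HB.instance Definition _ := isOpenTopological.Build KT kopT kopI kop_bigU.
Lemma KopenE (U : set KT) : open U <-> kopen U.
Proof. by []. Qed.
Definition setPQ (P : set J) (Q : set 'I_n.+1) : set KT :=
  fun z => match z with inl x => P (idx x) | inr k => Q k end.

Hypothesis H1 : forall P : set J, open (fun x => P (idx x)).
Hypothesis H2 : forall i, compact (fun x => idx x = i).
Hypothesis H3 : forall k (s : seq J), exists x, cls (idx x) = k /\ idx x \notin s.
Hypothesis hX : hausdorff_space X.

Lemma open_PQ P Q (s : seq J) : (forall i, Q (cls i) -> i \notin s -> P i) ->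
  open (setPQ P Q).
Proof.
move=> h; split; first exact: H1.
by move=> k Qk; exists s => x hx; apply: h; rewrite hx.
Qed.

Lemma open_inl (U : set X) : open U -> open (inl @` U : set KT).
Proof.
move=> oU; split.
  have -> : (fun x => (inl @` U : set KT) (inl x)) = U.
    by apply/funext => x; apply/propext; split => [[y Uy [<-]]|Ux] //; exists x.
  exact: oU.
by move=> k [].
Qed.

Lemma inl_continuous : continuous (inl : X -> KT).
Proof. by apply/continuousP => A /KopenE []. Qed.

Lemma K_hausdorff : hausdorff_space KT.
Proof.
rewrite open_hausdorff => -[x|j] [y|k] hne.
- have : x != y by apply: contra hne => /eqP ->.
  move: hX; rewrite open_hausdorff => /[apply] -[[U V] /= [xU yV] [oU oV /eqP UV]].
  exists (inl @` U, inl @` V) => /=.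
    by split; apply/mem_set; [exists x | exists y] => //; move: xU yV => /set_mem + /set_mem.
  split; [exact: open_inl|exact: open_inl|].
  apply/eqP/seteqP; split=> // z [[a Ua <-] [b Vb]] [eab]; subst b.
  by have : (U `&` V) a by []; rewrite UV.
- exists (setPQ [set idx x] set0, setPQ [set~ idx x] [set k]) => /=.
    by split; apply/mem_set.
  split; [apply: (@open_PQ _ _ [::]) => //|apply: (@open_PQ _ _ [:: idx x])|].
    by move=> i _; rewrite inE => /eqP.
  by apply/eqP/seteqP; split=> // -[a|a] [].
- exists (setPQ [set~ idx y] [set j], setPQ [set idx y] set0) => /=.
    by split; apply/mem_set.
  split; [apply: (@open_PQ _ _ [:: idx y])|apply: (@open_PQ _ _ [::]) => //|].
    by move=> i _; rewrite inE => /eqP.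
  by apply/eqP/seteqP; split=> // -[a|a] [] //= ->.
- have njk : j <> k by move=> e; move: hne; rewrite e eqxx.
  exists (setPQ [set i | cls i = j] [set j], setPQ [set i | cls i = k] [set k]) => /=.
    by split; apply/mem_set.
  split; [apply: (@open_PQ _ _ [::])|apply: (@open_PQ _ _ [::])|] => //.
  by apply/eqP/seteqP; split=> // -[a|a] [] /= -> //.
Qed.

Lemma K_compact : compact [set: KT].
Proof.
rewrite compact_cover => I0 D f fop fcov.
have [jk hjk] : {jk : 'I_n.+1 -> I0 & forall k, D (jk k) /\ f (jk k) (inr k)}.
  apply: (@choice _ _ (fun k j => D j /\ f j (inr k))) => k.
  by have [j Dj fj] := fcov (inr k) I; exists j.
have [sk hsk] : {sk : 'I_n.+1 -> seq J & forall k x,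
    cls (idx x) = k -> idx x \notin sk k -> f (jk k) (inl x)}.
  apply: (@choice _ _ (fun k s => forall x, cls (idx x) = k -> idx x \notin s -> f (jk k) (inl x))) => k.
  exact: ((fop _ (hjk k).1).2 k (hjk k).2).
pose S := flatten [seq sk k | k <- enum 'I_n.+1].
have cR : compact (inl @` [set x | idx x \in S] : set KT).
  apply: continuous_compact; first exact/continuous_subspaceT/inl_continuous.
  elim: S => [|a s IH].
    have -> : [set x | idx x \in [::]] = set0 by apply/seteqP; split.
    exact: compact0.
  have -> : [set x | idx x \in a :: s] = (fun x => idx x = a) `|` [set x | idx x \in s].
    apply/seteqP; split => x /=; rewrite in_cons.
      by case/orP => [/eqP ->|]; [left|right].
    by case => [->|->]; rewrite ?eqxx ?orbT.
  exact: compactU.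
move: cR; rewrite compact_cover => /(_ I0 D f fop) [].
  by move=> z _; exact: fcov.
move=> D' sD' cD'.
exists (fsetU D' [fset jk k | k in enum 'I_n.+1]%fset).
  move=> j; rewrite in_fsetU => /orP [/sD'|/imfsetP [k _ ->]] //.
  by apply/mem_set; exact: (hjk k).1.
move=> [x|k] _.
  case: (boolP (idx x \in S)) => hS.
    have [j Dj fj] : cover [set` D'] f (inl x) by apply: cD'; exists x.
    by exists j => //=; rewrite in_fsetU Dj.
  exists (jk (cls (idx x))).
    by rewrite /= in_fsetU; apply/orP; right; apply/imfsetP; exists (cls (idx x)); rewrite ?mem_enum.
  apply: hsk => //; apply: contra hS => hs.
  by apply/flatten_mapP; exists (cls (idx x)); rewrite ?mem_enum.
exists (jk k); last exact: (hjk k).2.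
by rewrite /= in_fsetU; apply/orP; right; apply/imfsetP; exists k; rewrite ?mem_enum.
Qed.

Lemma K_compactification : compactification (inl : X -> KT).
Proof.
split; [exact: K_compact|exact: K_hausdorff| |].
  split; [exact: inl_continuous|by move=> x y []|].
  move=> U oU; exists (inl @` U); split; first exact: open_inl.
  apply/seteqP; split => z; first by move=> [x Ux <-]; split; [exists x|exists x].
  by case.
move=> O [z Oz] /KopenE [oO hO].
case: z Oz => [x|k] Oz; first by exists (inl x); split => //; exists x.
have [s hs] := hO k Oz.
have [x [hx1 hx2]] := H3 k s.
by exists (inl x); split; [exact: hs|exists x].
Qed.
End KTsec.

Definition Ktop {X J} idx {n} cls : topologicalType := Topological.clone (@KT X J idx n cls) _.

Lemma inj_nat (J : choiceType) : infinite_set [set: J] -> exists h : nat -> J, injective h.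
Proof.
move=> /infiniteP /card_leP [f].
exists (fun n => set_val (f (@exist _ _ n (mem_set (I : [set: nat] n))))) => x y /= e.
have := @inj _ _ _ f _ _ (mem_set I) (mem_set I) (val_inj e). by case.
Qed.

Lemma avoid (T : eqType) (h : nat -> T) : injective h -> forall s : seq T, exists t, h t \notin s.
Proof.
move=> hi s; apply: contrapT => /forallNP H.
have Hs : forall t, h t \in s by move=> t; apply/negPn/negP/H.
have U : uniq (map h (iota 0 (size s).+1)) by rewrite (map_inj_uniq hi) iota_uniq.
have L : ((size s).+1 <= size s)%N.
  rewrite -[X in (X <= _)%N](size_iota 0) -(size_map h).
  by apply: uniq_leq_size U _ => _ /mapP [t _ ->]; exact: Hs.
by rewrite ltnn in L.
Qed.

Lemma card_rem (X : Type) m n (h : (X + 'I_m.+1)%type -> (X + 'I_n.+1)%type) :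
  injective h -> (forall x, h (inl x) = inl x) -> (m <= n)%N.
Proof.
move=> hi hl.
have hr k : exists k', h (inr k) = inr k'.
  case e: (h (inr k)) => [x|k']; last by exists k'.
  by move: e; rewrite -hl => /hi.
pose phi k := if h (inr k) is inr k' then k' else ord0.
have phiE k : h (inr k) = inr (phi k) by rewrite /phi; case: (hr k) => k' ->.
have : injective phi by move=> k1 k2 e; have := phiE k1; rewrite e -phiE => /hi [].
by move/leq_card; rewrite !card_ord.
Qed.

Theorem mainTheorem6 (X : topologicalType)
  (hX : hausdorff_space X) (lcX : locally_compact [set: X])
  (I : choiceType) (Y : I -> topologicalType)
  (hI : infinite_set [set: I])
  (cY : forall i, compact [set: Y i])
  (neY : forall i, [set: Y i] !=set0)
  (hom : homeomorphic X {i : I & Y i}) :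
  exists (K : nat -> topologicalType) (e : forall n, X -> K n),
    (forall n, compactification (e n)) /\
    (forall m n, m <> n -> ~ equiv_compactification (e m) (e n)).
Proof.
move: hom => [f [g [cf cg fK gK]]].
have [hh hinj] := @inj_nat _ hI.
pose idx x := projT1 (f x).
pose cls n (i : I) : 'I_n.+1 := match pselect (exists j, hh j = i) with
  | left e => inord (sval (cid e) %% n.+1) | right _ => ord0 end.
exists (fun m => Ktop idx (cls m)), (fun m => @inl X _).
split.
  move=> m; apply: K_compactification => //.
  - move=> P.
    have oP : open [set z : {i & Y i} | P (projT1 z)].
      apply/sigT_openP => j; case: (pselect (P j)) => Pj.
        have -> : existT _ j @^-1` [set z : {i & Y i} | P (projT1 z)] = setT.
          by apply/seteqP; split.
        exact: openT.
      have -> : existT _ j @^-1` [set z : {i & Y i} | P (projT1 z)] = set0.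
        by apply/seteqP; split.
      exact: open0.
    exact: (continuousP _).1 cf _ oP.
  - move=> i.
    have -> : (fun x => idx x = i) = g @` (existT _ i @` setT).
      apply/seteqP; split => x /=.
        rewrite /idx; case E: (f x) => [i' y] /= <-.
        by exists (existT _ i' y); [exists y|rewrite -E fK].
      by move=> [_ [y _ <-] <-]; rewrite /idx gK.
    apply: continuous_compact; first exact/continuous_subspaceT.
    apply: continuous_compact; last exact: cY.
    exact/continuous_subspaceT/existT_continuous.
  - move=> k s.
    have hi' : injective (fun t => hh (k + m.+1 * t)%N).
      by move=> t1 t2 /hinj /addnI /eqP; rewrite eqn_mul2l /= => /eqP.
    have [t ht] := @avoid _ _ hi' s.
    pose i := hh (k + m.+1 * t)%N.
    have [y _] := neY i.
    exists (g (existT _ i y)); rewrite /idx gK /=; split => //.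
    rewrite /cls; case: pselect => [e|ne]; last by exfalso; apply: ne; exists (k + m.+1 * t)%N.
    have := svalP (cid e) => /hinj ->.
    by rewrite [(k + _)%N]addnC [(m.+1 * t)%N]mulnC modnMDl modn_small // inord_val.
move=> m n mn [h [[h' [ch ch' hK h'K]] he]].
apply: mn; apply/eqP; rewrite eqn_leq; apply/andP; split.
  exact: (@card_rem X m n h (can_inj hK) he).
apply: (@card_rem X n m h' (can_inj h'K)) => x.
by rewrite -(he x) hK.
Qed.
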